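(* Let $\mathcal{C}$ be a skeletally small triangulated category and $H$ a $\mathbb{Q}$-subspace of $G(\mathcal{C})_{\mathbb{Q}}$. Then there exists a dense subcategory $\mathcal{D}$ of $\mathcal{C}$ such that the image of the (injective) natural map $G(\mathcal{D})_{\mathbb{Q}}\to G(\mathcal{C})_{\mathbb{Q}}$ equals $H$.
   Context: $G(\mathcal{C})$ is the Grothendieck group of the triangulated category $\mathcal{C}$ (free abelian group on isomorphism classes modulo $[V]=[U]+[W]$ for exact triangles $U\to V\to W\to U[1]$); $H_{\mathbb{Q}}=H\otimes_{\mathbb{Z}}\mathbb{Q}$. A dense subcategory is a triangulated subcategory $\mathcal{D}$ (full, closed under $[\pm1]$, isomorphisms and cones) such that for every $U\in\mathcal{C}$ there is $V$ with $U\oplus V\in\mathcal{D}$. *)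

(* Defs.v *)
From Stdlib Require Import List.
From HB Require Import structures.
From mathcomp Require Import all_boot all_order all_algebra.
Set Implicit Arguments.
Unset Strict Implicit.
Unset Printing Implicit Defensive.
Import GRing.Theory.
Local Open Scope ring_scope.

(* Preadditive category: Hom-sets are abelian groups, composition bilinear.
   Objects form a Type (a small collection), so the category is (skeletally) small. *)
Record preadd := PreAdd {
  Obj :> Type;
  Hom : Obj -> Obj -> zmodType;
  comp : forall X Y Z : Obj, Hom Y Z -> Hom X Y -> Hom X Z;
  idm : forall X : Obj, Hom X X;
  compA : forall X Y Z W (f : Hom Z W) (g : Hom Y Z) (h : Hom X Y),
      comp (comp f g) h = comp f (comp g h);
  comp1m : forall X Y (f : Hom X Y), comp (idm Y) f = f;
  compm1 : forall X Y (f : Hom X Y), comp f (idm X) = f;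
  compDl : forall X Y Z (f g : Hom Y Z) (h : Hom X Y),
      comp (f + g) h = comp f h + comp g h;
  compDr : forall X Y Z (f : Hom Y Z) (g h : Hom X Y),
      comp f (g + h) = comp f g + comp f h
}.
Arguments Hom {p}.
Arguments comp {p X Y Z}.
Arguments idm {p}.

Section PreaddDefs.
Variable C : preadd.

Definition is_iso (X Y : C) (f : Hom X Y) :=
  exists g : Hom Y X, comp g f = idm X /\ comp f g = idm Y.

Definition iso_obj (X Y : C) := exists f : Hom X Y, is_iso f.

Definition is_zero_obj (Z : C) :=
  forall X : C, (forall f : Hom Z X, f = 0) /\ (forall g : Hom X Z, g = 0).

Definition biproduct (X Y P : C) :=
  exists (i1 : Hom X P) (i2 : Hom Y P) (p1 : Hom P X) (p2 : Hom P Y),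
    [/\ comp p1 i1 = idm X, comp p2 i2 = idm Y, comp p1 i2 = 0,
        comp p2 i1 = 0 & comp i1 p1 + comp i2 p2 = idm P].

Variable S : C -> C.
Variable Sm : forall X Y : C, Hom X Y -> Hom (S X) (S Y).

Record triangle := Tri {
  t1 : C; t2 : C; t3 : C;
  tf : Hom t1 t2; tg : Hom t2 t3; th : Hom t3 (S t1) }.

Definition rotate (T : triangle) : triangle :=
  @Tri (t2 T) (t3 T) (S (t1 T)) (tg T) (th T) (- Sm (tf T)).

Definition tri_morph (T T' : triangle) (a : Hom (t1 T) (t1 T'))
    (b : Hom (t2 T) (t2 T')) (c : Hom (t3 T) (t3 T')) :=
  [/\ comp b (tf T) = comp (tf T') a,
      comp c (tg T) = comp (tg T') b &
      comp (Sm a) (th T) = comp (th T') c].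

Definition tri_iso (T T' : triangle) :=
  exists a b c, @tri_morph T T' a b c /\ is_iso a /\ is_iso b /\ is_iso c.

Variable dist : triangle -> Prop.

Definition TR1 :=
  [/\ (forall T T', tri_iso T T' -> dist T -> dist T'),
      (forall X Z : C, is_zero_obj Z -> dist (@Tri X X Z (idm X) 0 0) ) &
      (forall (X Y : C) (f : Hom X Y),
          exists Z (g : Hom Y Z) (h : Hom Z (S X)), dist (Tri f g h))].

Definition TR2 := forall T, dist T <-> dist (rotate T).

Definition TR3 := forall T T' a b, dist T -> dist T' ->
  comp b (tf T) = comp (tf T') a -> exists c, @tri_morph T T' a b c.

Definition TR4 := forall (X Y Z Q1 Q2 Q3 : C) (f : Hom X Y) (g : Hom Y Z)
    (p1 : Hom Y Q1) (d1 : Hom Q1 (S X))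
    (p2 : Hom Z Q2) (d2 : Hom Q2 (S X))
    (p3 : Hom Z Q3) (d3 : Hom Q3 (S Y)),
  dist (Tri f p1 d1) -> dist (Tri (comp g f) p2 d2) -> dist (Tri g p3 d3) ->
  exists (a : Hom Q1 Q2) (b : Hom Q2 Q3),
    [/\ dist (Tri a b (comp (Sm p1) d3)),
        comp a p1 = comp p2 g, comp d2 a = d1,
        comp b p2 = p3 & comp d3 b = comp (Sm f) d2].

End PreaddDefs.

Record triang := Triang {
  tcat :> preadd;
  shift : tcat -> tcat;
  shiftm : forall X Y : tcat, Hom X Y -> Hom (shift X) (shift Y);
  zero_ex : exists Z : tcat, is_zero_obj Z;
  biprod_ex : forall X Y : tcat, exists P, biproduct X Y P;
  shiftmD : forall (X Y : tcat) (f g : Hom X Y),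
      shiftm (f + g) = shiftm f + shiftm g;
  shiftm1 : forall X : tcat, shiftm (idm X) = idm (shift X);
  shiftmM : forall (X Y Z : tcat) (f : Hom Y Z) (g : Hom X Y),
      shiftm (comp f g) = comp (shiftm f) (shiftm g);
  shift_ff : forall X Y : tcat, bijective (@shiftm X Y);
  shift_ess : forall Y : tcat, exists X, iso_obj (shift X) Y;
  dist : triangle shift -> Prop;
  tr1 : TR1 shiftm dist;
  tr2 : TR2 shiftm dist;
  tr3 : TR3 shiftm dist;
  tr4 : TR4 shiftm dist
}.
Arguments shift {t}.
Arguments dist {t}.

Section GrothDefs.
Variable C : triang.

Definition additive_on (W : zmodType) (phi : C -> W) :=
  forall T : triangle shift, dist T -> phi (t2 T) = phi (t1 T) + phi (t3 T).

(* (V, cls) is the rationalized Grothendieck group G(C)_Q = G(C) (x)_Z Q,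
   characterized by its universal property: the initial Q-vector space
   with a map from objects that is additive on exact triangles. *)
Definition is_GQ (V : lmodType rat) (cls : C -> V) :=
  [/\ additive_on cls,
      (forall v : V, exists s : seq (rat * C),
          v = \sum_(p <- s) p.1 *: cls p.2) &
      (forall (W : lmodType rat) (phi : C -> W), additive_on phi ->
          exists psi : {linear V -> W}, forall X : C, psi (cls X) = phi X)].

(* Triangulated subcategory (full, given by a class of objects): closed
   under isomorphisms, [1], [-1] and cones. *)
Definition triang_subcat (D : C -> Prop) :=
  [/\ (forall X Y : C, iso_obj X Y -> D X -> D Y),
      (forall X : C, D X -> D (shift X)),
      (forall X : C, D (shift X) -> D X) &
      (forall T : triangle shift, dist T -> D (t1 T) -> D (t2 T) -> D (t3 T))].

Definition dense (D : C -> Prop) :=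
  triang_subcat D /\
  forall U : C, exists (V P : C), biproduct U V P /\ D P.

(* Image of the natural map G(D)_Q -> G(C)_Q, [X]_D |-> [X]_C: the
   Q-span of the classes of objects of D. *)
Definition GQ_image (V : lmodType rat) (cls : C -> V) (D : C -> Prop) (v : V) :=
  exists s : seq (rat * C), (forall p, In p s -> D p.2) /\
    v = \sum_(p <- s) p.1 *: cls p.2.

End GrothDefs.

(* Main.v *)
Require Import Defs.
From mathcomp Require Import all_boot all_order all_algebra.
From mathcomp Require Import zify.
Import Defs.
Set Implicit Arguments.
Unset Strict Implicit.
Unset Printing Implicit Defensive.
Import GRing.Theory.
Local Open Scope ring_scope.

Lemma comp0r (C : preadd) (X Y Z : C) (f : Hom Y Z) : comp f (0 : Hom X Y) = 0.
Proof. by apply: (addrI (comp f 0)); rewrite -compDr !addr0. Qed.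

Lemma comp0l (C : preadd) (X Y Z : C) (f : Hom X Y) : comp (0 : Hom Y Z) f = 0.
Proof. by apply: (addrI (comp 0 f)); rewrite -compDl !addr0. Qed.

Lemma compNl (C : preadd) (X Y Z : C) (f : Hom Y Z) (g : Hom X Y) :
  comp (- f) g = - comp f g.
Proof. by apply/eqP; rewrite -addr_eq0 -compDl addNr comp0l. Qed.

Lemma idm0_zero (C : preadd) (X : C) : idm X = 0 -> is_zero_obj X.
Proof.
move=> H Y; split.
- by move=> f; rewrite -(compm1 f) H comp0r.
- by move=> g; rewrite -(comp1m g) H comp0l.
Qed.

Lemma shiftm0 (C : triang) (X Y : C) : shiftm (0 : Hom X Y) = 0.
Proof. by apply: (addrI (shiftm (0 : Hom X Y))); rewrite -shiftmD !addr0. Qed.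

Lemma shift_zero (C : triang) (Z : C) : is_zero_obj Z -> is_zero_obj (shift Z).
Proof.
move=> HZ; apply: idm0_zero.
by rewrite -shiftm1 (proj1 (HZ Z) (idm Z)) shiftm0.
Qed.

Lemma dist_id (C : triang) (X Z : C) : is_zero_obj Z ->
  dist (@Tri _ shift X X Z (idm X) 0 0).
Proof. by case: (tr1 C) => _ H _; apply: H. Qed.

Lemma dist_rot (C : triang) (T : triangle (@shift C)) : dist T -> dist (rotate (@shiftm C) T).
Proof. by move/(tr2 T). Qed.

Lemma factor (C : triang) (T : triangle (@shift C)) (Y : C) (x : Hom (t2 T) Y) :
  dist T -> comp x (tf T) = 0 -> exists c : Hom (t3 T) Y, comp c (tg T) = x.
Proof.
move=> HT Hx.
have [Z HZ] := zero_ex C.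
pose T' := @Tri _ shift Z Y Y (0 : Hom Z Y) (idm Y) (0 : Hom Y (shift Z)).
have HT' : dist T'.
  apply/(tr2 T'); rewrite /rotate /= shiftm0 oppr0.
  by apply: dist_id; apply: shift_zero.
have [|c [_ Hc _]] := @tr3 C T T' (0 : Hom (t1 T) Z) x HT HT'.
  by rewrite Hx /= comp0r.
by exists c; rewrite Hc /= comp1m.
Qed.

Lemma comp_dist0 (C : triang) (T : triangle (@shift C)) :
  dist T -> comp (tg T) (tf T) = 0.
Proof.
move=> HT.
have [Z HZ] := zero_ex C.
pose T0 := @Tri _ shift (t1 T) (t1 T) Z (idm (t1 T)) 0 0.
have H0 : dist T0 := dist_id (t1 T) HZ.
have [c [_ Hc _]] := @tr3 C T0 T (idm (t1 T)) (tf T) H0 HT erefl.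
by rewrite -Hc /= comp0r.
Qed.

Lemma biprod_dist (C : triang) (U V P : C) (i1 : Hom U P) (i2 : Hom V P)
  (p1 : Hom P U) (p2 : Hom P V) :
  comp p1 i1 = idm U -> comp p2 i2 = idm V -> comp p1 i2 = 0 ->
  comp p2 i1 = 0 -> comp i1 p1 + comp i2 p2 = idm P ->
  dist (@Tri _ shift U P V i1 p2 0).
Proof.
move=> E1 E2 E3 E4 E5.
have [Hiso _ Hex] := tr1 C.
have [W [g [h HT]]] := Hex U P i1.
set T := Tri i1 g h in HT.
have HR := dist_rot HT.
have h0 : h = 0.
  have := comp_dist0 (dist_rot HR); rewrite /rotate /= compNl => /eqP; rewrite oppr_eq0 => /eqP H.
  by rewrite -(comp1m h) -shiftm1 -E1 shiftmM compA H comp0r.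
have gi1 : comp g i1 = 0 := comp_dist0 HT.
have [c Hc] := @factor C T V p2 HT E4.
simpl in Hc.
have epi : forall x : Hom W W, comp x g = 0 -> x = 0.
  move=> x Hx; have [e He] := @factor C (rotate (@shiftm C) T) W x HR Hx.
  by rewrite -He /= h0 comp0r.
have Hdc : comp (comp g i2) c = idm W.
  apply/eqP; rewrite -subr_eq0; apply/eqP/epi.
  rewrite compDl compNl comp1m !compA Hc.
  have -> : comp g (comp i2 p2) = g.
    by rewrite -{2}(compm1 g) -E5 compDr -(compA g i1) gi1 comp0l add0r.
  by rewrite subrr.
apply: (Hiso T); last exact: HT.
exists (idm U), (idm P), c; split.
  by split; rewrite /= ?comp1m ?compm1 ?Hc // shiftm1 comp1m h0 comp0l.
split; first by exists (idm U); rewrite comp1m.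
split; first by exists (idm P); rewrite comp1m.
by exists (comp g i2); split=> //; rewrite -compA Hc.
Qed.

Lemma cls_zero (C : triang) (W : zmodType) (cls : C -> W) (Hadd : additive_on cls)
  (Z : C) : is_zero_obj Z -> cls Z = 0.
Proof.
move=> HZ; have := Hadd _ (dist_id Z HZ); rewrite /= => E.
by apply: (addrI (cls Z)); rewrite addr0 -E.
Qed.

Lemma cls_iso (C : triang) (W : zmodType) (cls : C -> W) (Hadd : additive_on cls)
  (X Y : C) : iso_obj X Y -> cls X = cls Y.
Proof.
move=> [f [g [Hgf Hfg]]].
have [Z HZ] := zero_ex C.
have [Hiso _ _] := tr1 C.
have HT : dist (@Tri _ shift X Y Z f 0 0).
  apply: (Hiso _ _ _ (dist_id X HZ)).
  exists (idm X), f, (idm Z); split.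
    by split; rewrite /= ?comp1m ?compm1 ?comp0r ?comp0l.
  split; first by exists (idm X); rewrite comp1m.
  split; first by exists g.
  by exists (idm Z); rewrite comp1m.
by have := Hadd _ HT; rewrite /= (cls_zero Hadd HZ) addr0.
Qed.

Lemma cls_shift (C : triang) (W : zmodType) (cls : C -> W) (Hadd : additive_on cls)
  (X : C) : cls (shift X) = - cls X.
Proof.
have [Z HZ] := zero_ex C.
have := Hadd _ (dist_rot (dist_id X HZ)); rewrite /= (cls_zero Hadd HZ) => E.
by apply/eqP; rewrite -addr_eq0 addrC -E.
Qed.

Lemma cls_biprod (C : triang) (W : zmodType) (cls : C -> W) (Hadd : additive_on cls)
  (U V P : C) : biproduct U V P -> cls P = cls U + cls V.
Proof.
move=> [i1 [i2 [p1 [p2 [E1 E2 E3 E4 E5]]]]].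
exact: (Hadd _ (biprod_dist E1 E2 E3 E4 E5)).
Qed.

Lemma cls_natmul (C : triang) (W : zmodType) (cls : C -> W) (Hadd : additive_on cls)
  (X : C) (k : nat) : exists Y, cls Y = cls X *+ k.
Proof.
elim: k => [|k [Y HY]].
  have [Z HZ] := zero_ex C; exists Z; exact: cls_zero.
have [P HP] := biprod_ex X Y.
by exists P; rewrite (cls_biprod Hadd HP) HY mulrS.
Qed.

Lemma cls_intmul (C : triang) (W : zmodType) (cls : C -> W) (Hadd : additive_on cls)
  (X : C) (k : int) : exists Y, cls Y = cls X *~ k.
Proof.
case: k => k.
  exact: cls_natmul.
have [Y HY] := cls_natmul Hadd X k.+1.
by exists (shift Y); rewrite (cls_shift Hadd) HY NegzE mulrNz.
Qed.

Lemma cls_span (C : triang) (V : lmodType rat) (cls : C -> V) (Hadd : additive_on cls)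
  (s : seq (rat * C)) :
  exists (n : nat) (Y : C), (\sum_(p <- s) p.1 *: cls p.2) *+ n.+1 = cls Y.
Proof.
elim: s => [|[q X] s [m [Y HY]]].
  have [Z HZ] := zero_ex C; exists 0%N, Z.
  by rewrite big_nil mul0rn (cls_zero Hadd HZ).
have [d Ed] : exists d : nat, denq q = (d.+1)%:Z.
  have := denq_gt0 q; case: (denq q) => [[|d]|d] //= _; by exists d.
have Ht : (q *: cls X) *+ d.+1 = cls X *~ numq q.
  by rewrite scalerMnl -scaler_int numqE Ed -mulr_natr.
have [X1 HX1] := cls_intmul Hadd X (numq q).
have [X2 HX2] := cls_natmul Hadd X1 m.+1.
have [Y2 HY2] := cls_natmul Hadd Y d.+1.
have [P HP] := biprod_ex X2 Y2.
exists (d * m + d + m)%N, P.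
rewrite (cls_biprod Hadd HP) HX2 HY2 HX1 -Ht -HY big_cons /=.
have -> : (d * m + d + m).+1 = (d.+1 * m.+1)%N by lia.
by rewrite mulrnDl mulrnA; congr (_ + _); rewrite mulnC mulrnA.
Qed.

Theorem lemma3p3 (C : triang) (V : lmodType rat) (cls : C -> V)
    (HG : is_GQ cls) (H : {pred V}) (HH : GRing.submod_closed H) :
  exists D : C -> Prop, dense D /\ (forall v : V, v \in H <-> GQ_image cls D v).
Proof.
case: HG => Hadd Hspan _.
case: HH => H0 Hlin.
have HD : forall u w, u \in H -> w \in H -> u + w \in H.
  by move=> u w Hu Hw; have := Hlin 1 u w Hu Hw; rewrite scale1r.
have HZ : forall (a : rat) u, u \in H -> a *: u \in H.
  by move=> a u Hu; have := Hlin a u 0 Hu H0; rewrite addr0.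
have HN : forall u, u \in H -> - u \in H.
  by move=> u Hu; rewrite -scaleN1r; exact: HZ.
exists (fun X => cls X \in H); split.
- split.
  + split.
    * by move=> X Y /(cls_iso Hadd) <-.
    * by move=> X; rewrite (cls_shift Hadd); exact: HN.
    * by move=> X; rewrite (cls_shift Hadd) => /HN; rewrite opprK.
    * move=> T HT /= h1 h2; have E := Hadd T HT.
      have -> : cls (t3 T) = cls (t2 T) + - cls (t1 T).
        by rewrite E addrAC subrr add0r.
      by apply: HD => //; apply: HN.
  + move=> U; have [P HP] := biprod_ex U (shift U).
    exists (shift U), P; split => //.
    by rewrite (cls_biprod Hadd HP) (cls_shift Hadd) subrr.
- move=> v; split.
  + move=> Hv; have [s Es] := Hspan v; have [n [Y HY]] := cls_span Hadd s.
    rewrite -Es in HY.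
    exists [:: ((n.+1%:R)^-1, Y)]; split.
      move=> p [<-|[]] /=; rewrite -HY -scaler_nat; exact: HZ.
    rewrite big_cons big_nil addr0 /= -HY -scaler_nat scalerA mulVf ?scale1r //.
    by rewrite Num.Theory.pnatr_eq0.
  + move=> [s [Hs ->]].
    elim: s Hs => [|p s IH] Hs; first by rewrite big_nil.
    rewrite big_cons; apply: HD.
      by apply: HZ; apply: Hs; left.
    by apply: IH => q Hq; apply: Hs; right.
Qed.
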